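(* Let $(a_i),(b_i)$ be finitely supported integer sequences, neither identically zero, and $q_i=a_i-b_i$. The following are equivalent. (1) With $q_\mu$ the lowest-index nonzero $q_i$ and $q_\nu$ the highest-index nonzero $q_i$: (a) $a_l=0$ for $l<\mu$ and $l\ge\nu$; (b) $a_\mu=q_\mu>0$; (c) $\sum_iq_i=0$; (d) $\max(q_l,0)\le a_l\le\sum_{i\le l}q_i$ for all integers $l$. (2) With $a_\mu$ the lowest-index nonzero $a_i$ and $b_\nu$ the highest-index nonzero $b_i$: (a) all $a_i,b_i\ge0$; (b) $a_l=0$ for $l\ge\nu$ and $b_l=0$ for $l\le\mu$; (c) $\sum_ia_i=\sum_ib_i$; (d) $\sum_{i\le l}b_i\le\sum_{i<l}a_i$ for all integers $l$. (3) With $m=\sum a_i$, $n=\sum b_i$: (a) all $a_i,b_i\ge0$; (b) $m=n$; (c) for all $1\le\alpha\le m$, $1\le\beta\le n$ with $\beta\ge\alpha$, $S(a)_\alpha<S(b)_\beta$.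
   Context: For a finitely supported sequence $(c_i)$ of non-negative integers, $S(c)$ is the nondecreasing sequence of length $\sum_ic_i$, indexed from $1$, in which each integer $i$ appears exactly $c_i$ times. *)

(* Defs.v *)
From mathcomp Require Import all_boot all_order all_algebra.
Set Implicit Arguments. Unset Strict Implicit. Unset Printing Implicit Defensive.
Import Order.TTheory GRing.Theory Num.Theory.
Local Open Scope ring_scope.

Definition window (N : nat) : seq int :=
  [seq (k%:Z - N%:Z) | k <- iota 0 (N.*2.+1)].

Definition supported_in (N : nat) (c : int -> int) : Prop :=
  forall i : int, N%:Z < `|i| -> c i = 0.

Definition tot (N : nat) (c : int -> int) : int := \sum_(i <- window N) c i.
Definition psum_le (N : nat) (c : int -> int) (l : int) : int :=
  \sum_(i <- window N | i <= l) c i.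
Definition psum_lt (N : nat) (c : int -> int) (l : int) : int :=
  \sum_(i <- window N | i < l) c i.

(* S(c): nondecreasing sequence in which each i appears c_i times
   (meaningful when c is nonnegative). *)
Definition Sseq (N : nat) (c : int -> int) : seq int :=
  flatten [seq nseq (absz (c i)) i | i <- window N].
(* 1-indexed access S(c)_alpha *)
Definition Sat (N : nat) (c : int -> int) (alpha : nat) : int :=
  nth 0 (Sseq N c) alpha.-1.

Definition cond1 (N : nat) (a b : int -> int) : Prop :=
  let q := fun i => a i - b i in
  exists mu nu : int,
    [/\ q mu != 0, (forall i, i < mu -> q i = 0),
        q nu != 0, (forall i, nu < i -> q i = 0) &
    [/\ (forall l, (l < mu \/ nu <= l) -> a l = 0),
        a mu = q mu /\ 0 < q mu,
        tot N q = 0 &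
        (forall l, Num.max (q l) 0 <= a l /\ a l <= psum_le N q l)]].

Definition cond2 (N : nat) (a b : int -> int) : Prop :=
  exists mu nu : int,
    [/\ a mu != 0, (forall i, i < mu -> a i = 0),
        b nu != 0, (forall i, nu < i -> b i = 0) &
    [/\ (forall i, 0 <= a i /\ 0 <= b i),
        (forall l, nu <= l -> a l = 0) /\ (forall l, l <= mu -> b l = 0),
        tot N a = tot N b &
        (forall l, psum_le N b l <= psum_lt N a l)]].

Definition cond3 (N : nat) (a b : int -> int) : Prop :=
  let m := tot N a in let n := tot N b in
  [/\ (forall i, 0 <= a i /\ 0 <= b i),
      m = n &
      (forall alpha beta : nat, (1 <= alpha)%N -> alpha%:Z <= m ->
         (1 <= beta)%N -> beta%:Z <= n -> (alpha <= beta)%N ->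
         Sat N a alpha < Sat N b beta)].

(* Main.v *)
Require Import Defs.
From mathcomp Require Import all_boot all_order all_algebra.
From mathcomp Require Import zify.
Import Order.TTheory GRing.Theory Num.Theory.
Local Open Scope ring_scope.

Lemma mem_window (N : nat) (i : int) : `|i| <= N%:Z -> i \in window N.
Proof.
move=> h; apply/mapP; exists (absz (i + N%:Z)).
  rewrite mem_iota; lia.
lia.
Qed.

Lemma supp_zero (N : nat) (c : int -> int) (P : pred int) (l : int) :
  supported_in N c -> (forall i, 0 <= c i) ->
  \sum_(i <- window N | P i) c i = 0 -> P l -> c l = 0.
Proof.
move=> hs hn hsum Pl.
case: (leP `|l| N%:Z) => hl; last by apply: hs.
move/eqP: hsum => hsum.
rewrite (psumr_eq0 (window N) (fun i _ => hn i)) in hsum.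
move/allP: hsum => /(_ l (@mem_window N l hl)); rewrite Pl /= => /eqP //.
Qed.

Lemma ex_min_supp (N : nat) (c : int -> int) :
  supported_in N c -> (exists i, c i != 0) ->
  exists mu, c mu != 0 /\ (forall i, i < mu -> c i = 0).
Proof.
move=> hs [i0 hi0].
pose P := fun k : nat => c (k%:Z - N%:Z) != 0.
have hi0N : `|i0| <= N%:Z.
  by case: (leP `|i0| N%:Z) => // h; move: hi0; rewrite hs ?eqxx.
have exP : exists k, P k.
  exists (absz (i0 + N%:Z)); rewrite /P.
  have -> : (absz (i0 + N%:Z))%:Z - N%:Z = i0 by lia.
  exact: hi0.
case: (ex_minnP exP) => m Pm hmin.
exists (m%:Z - N%:Z); split => // i hi.
apply/eqP; apply/negPn/negP => hci.
have hiN : `|i| <= N%:Z.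
  by case: (leP `|i| N%:Z) => // h; move: hci; rewrite hs ?eqxx.
have : P (absz (i + N%:Z)).
  rewrite /P; have -> : (absz (i + N%:Z))%:Z - N%:Z = i by lia.
  exact: hci.
move/hmin; lia.
Qed.

Lemma ex_max_supp (N : nat) (c : int -> int) :
  supported_in N c -> (exists i, c i != 0) ->
  exists nu, c nu != 0 /\ (forall i, nu < i -> c i = 0).
Proof.
move=> hs [i0 hi0].
have hs' : supported_in N (fun i => c (- i)).
  by move=> i hi; apply: hs; rewrite normrN.
have [mu [h1 h2]] : exists mu, c (- mu) != 0 /\ (forall i, i < mu -> c (- i) = 0).
  apply: (@ex_min_supp N _ hs'); exists (- i0); by rewrite opprK.
exists (- mu); split => // i hi.
rewrite -(opprK i); apply: h2; by rewrite ltrNl.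
Qed.

Lemma count_gen (w : seq int) (c : int -> int) (P : pred int) :
  (forall i, 0 <= c i) ->
  (count P (flatten [seq nseq (absz (c i)) i | i <- w]))%:Z =
  \sum_(i <- w | P i) c i.
Proof.
move=> hn; elim: w => [|x w IH]; first by rewrite big_nil.
rewrite /= count_cat count_nseq PoszD big_cons IH.
by case: (P x); rewrite ?mul1n ?mul0n ?add0r // gez0_abs.
Qed.

Lemma path_nseq (x0 y : int) k : x0 <= y -> path <=%R x0 (nseq k y).
Proof.
elim: k x0 => [|k IH] x0 h //=; rewrite h /=; exact: IH.
Qed.

Lemma path_flat (f : int -> nat) (w : seq int) (x0 : int) :
  path <=%R x0 w -> path <=%R x0 (flatten [seq nseq (f i) i | i <- w]).
Proof.
elim: w x0 => [|y w IH] x0 //= /andP [hxy hp].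
rewrite cat_path path_nseq //=.
case: (f y) => [|k] /=.
  apply: IH; apply: (path_le le_trans hxy hp).
have -> : last y (nseq k y) = y by elim: k.
exact: IH.
Qed.

Lemma sorted_Sseq (N : nat) (c : int -> int) : sorted <=%R (Sseq N c).
Proof.
rewrite /Sseq.
have hw : sorted <=%R (window N).
  rewrite /window sorted_map.
  apply: (sub_sorted _ (iota_sorted 0 _)) => x y /= h.
  by rewrite lerD2r lez_nat.
case: (window N) hw => [|y w] //= hw.
apply: (@path_sorted _ _ y).
apply: (path_flat (fun i => absz (c i)) (y :: w) y) => /=; rewrite lexx; exact: hw.
Qed.

Lemma nth_sorted_count (s : seq int) (P : pred int) :
  (forall x y, x <= y -> P y -> P x) -> sorted <=%R s ->
  forall i, (i < size s)%N -> P (nth 0 s i) = (i < count P s)%N.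
Proof.
move=> Pm; elim: s => [|x s IH] //= Hs i Hi.
have Hs' : sorted <=%R s := path_sorted Hs.
have Hall : all (fun y => x <= y) s := order_path_min le_trans Hs.
have c0 : P x = false -> count P s = 0%N.
  move=> Px; apply/eqP; rewrite -leqn0 leqNgt -has_count; apply/hasP => [[y ys Py]].
  by move/allP: Hall => /(_ y ys) hxy; move: (Pm _ _ hxy Py); rewrite Px.
case: i Hi => [|i] Hi /=.
  case Px: (P x) => //=; by rewrite c0.
rewrite IH //; case Px: (P x) => /=; first by rewrite add1n ltnS.
by rewrite c0.
Qed.

Section Main.
Variables (N : nat).

Lemma size_Sseq c : (forall i, 0 <= c i) -> (size (Sseq N c))%:Z = tot N c.
Proof. move=> hn; rewrite -count_predT; exact: count_gen. Qed.

Lemma psum_le_cnt c l : (forall i, 0 <= c i) ->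
  psum_le N c l = (count (fun x : int => (x <= l)%R) (Sseq N c))%:Z.
Proof. move=> hn; by rewrite count_gen. Qed.

Lemma psum_lt_cnt c l : (forall i, 0 <= c i) ->
  psum_lt N c l = (count (fun x : int => (x < l)%R) (Sseq N c))%:Z.
Proof. move=> hn; by rewrite count_gen. Qed.

Lemma nth_le c l k : (k < size (Sseq N c))%N ->
  (nth 0 (Sseq N c) k <= l) = (k < count (fun x : int => (x <= l)%R) (Sseq N c))%N.
Proof.
move=> hk; apply: (@nth_sorted_count _ (fun x : int => (x <= l)%R)) => //.
  by move=> x y hxy hy; apply: le_trans hy.
exact: sorted_Sseq.
Qed.

Lemma nth_lt c l k : (k < size (Sseq N c))%N ->
  (nth 0 (Sseq N c) k < l) = (k < count (fun x : int => (x < l)%R) (Sseq N c))%N.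
Proof.
move=> hk; apply: (@nth_sorted_count _ (fun x : int => (x < l)%R)) => //.
  by move=> x y hxy hy; apply: le_lt_trans hy.
exact: sorted_Sseq.
Qed.

Lemma L23 a b : (forall i, 0 <= a i /\ 0 <= b i) -> tot N a = tot N b ->
  (forall l, psum_le N b l <= psum_lt N a l) <->
  (forall alpha beta : nat, (1 <= alpha)%N -> alpha%:Z <= tot N a ->
         (1 <= beta)%N -> beta%:Z <= tot N b -> (alpha <= beta)%N ->
         Sat N a alpha < Sat N b beta).
Proof.
move=> hn heq.
have ha : forall i, 0 <= a i by move=> i; case: (hn i).
have hb : forall i, 0 <= b i by move=> i; case: (hn i).
have sa := @size_Sseq a ha; have sb := @size_Sseq b hb.
split.
- move=> hd al be h1 h2 h3 h4 h5; rewrite /Sat.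
  set l := nth 0 (Sseq N b) be.-1.
  rewrite ltNge; apply/negP => H.
  have Hb : (be.-1 < count (fun x : int => (x <= l)%R) (Sseq N b))%N.
    rewrite -nth_le ?lexx //; lia.
  have Ha : ~~ (al.-1 < count (fun x : int => (x < l)%R) (Sseq N a))%N.
    rewrite -nth_lt; last lia.
    by rewrite -leNgt.
  move: (hd l); rewrite psum_le_cnt // psum_lt_cnt // lez_nat.
  lia.
- move=> h3 l; rewrite psum_le_cnt // psum_lt_cnt // lez_nat.
  case hk: (count (fun x : int => (x <= l)%R) (Sseq N b)) => [|k] //.
  have hks : (k.+1 <= size (Sseq N b))%N by rewrite -hk count_size.
  have := h3 k.+1 k.+1 isT _ isT _ (leqnn _).
  rewrite /Sat /= => /(_ ltac:(lia) ltac:(lia)) hlt.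
  have hbl : nth 0 (Sseq N b) k <= l by rewrite nth_le // -hk.
  have : nth 0 (Sseq N a) k < l by apply: lt_le_trans hbl.
  rewrite nth_lt; last lia.
  done.
Qed.

Lemma window_uniq : uniq (window N).
Proof.
rewrite /window map_inj_uniq ?iota_uniq // => x y /= h; lia.
Qed.

Lemma psum_split c l : supported_in N c ->
  psum_le N c l = psum_lt N c l + c l.
Proof.
move=> hs; rewrite /psum_le /psum_lt (bigID (fun i => i < l)) /=.
have -> : \sum_(i <- window N | (i <= l) && (i < l)) c i =
          \sum_(i <- window N | i < l) c i.
  by apply: eq_bigl => i; case: (ltP i l) => h; rewrite ?andbT ?andbF // ltW.
congr (_ + _).
rewrite (eq_bigl (fun i => i == l)); last first.
  by move=> i /=; rewrite -leNgt -eq_le.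
transitivity (\sum_(i <- window N | i == l) c l).
  by apply: eq_bigr => i /eqP ->.
rewrite big_const_seq.
have -> : count (fun i => i == l) (window N) = (l \in window N).
  exact: (count_uniq_mem l window_uniq).
case hl: (l \in window N) => /=; first by rewrite addr0.
case: (leP `|l| N%:Z) => h; last by rewrite hs.
by rewrite mem_window in hl.
Qed.

Lemma Lb a b mu nu : supported_in N a -> supported_in N b ->
  (forall i, 0 <= a i /\ 0 <= b i) -> tot N a = tot N b ->
  (forall l, psum_le N b l <= psum_lt N a l) ->
  (forall i, i < mu -> a i = 0) -> (forall i, nu < i -> b i = 0) ->
  (forall l, nu <= l -> a l = 0) /\ (forall l, l <= mu -> b l = 0).
Proof.
move=> hsa hsb hn ht hd hmu hnu.
have ha : forall i, 0 <= a i by move=> i; case: (hn i).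
have hb : forall i, 0 <= b i by move=> i; case: (hn i).
split.
- have e1 : psum_le N b nu = tot N b.
    rewrite /psum_le /tot [in LHS]big_mkcond /=; apply: eq_bigr => i _.
    by case: (leP i nu) => // h; rewrite hnu.
  move: (hd nu); rewrite e1 -ht /tot (bigID (fun i => i < nu)) /= -/(psum_lt N a nu).
  set R := \sum_(i <- window N | ~~ (i < nu)) a i => hR.
  have R0 : 0 <= R by apply: sumr_ge0.
  have R00 : R = 0 by apply/eqP; rewrite eq_le R0 andbT -(lerD2l (psum_lt N a nu)) addr0.
  move=> l hl; apply: (@supp_zero N a (fun i => ~~ (i < nu)) l hsa ha R00).
  by rewrite /= -leNgt.
- have e0 : psum_lt N a mu = 0 by rewrite /psum_lt big1 // => i /hmu.
  have : psum_le N b mu = 0.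
    apply/eqP; rewrite eq_le -e0 hd /= e0; apply: sumr_ge0 => i _; exact: hb.
  move=> h0 l hl; exact: (@supp_zero N b (fun i => i <= mu) l hsb hb h0 hl).
Qed.

End Main.

Theorem mainTheorem14 (N : nat) (a b : int -> int) :
  supported_in N a -> supported_in N b ->
  (exists i, a i != 0) -> (exists i, b i != 0) ->
  (cond1 N a b <-> cond2 N a b) /\ (cond2 N a b <-> cond3 N a b).
Proof.
move=> hsa hsb hea heb.
have [mua [hmua1 hmua2]] := @ex_min_supp N a hsa hea.
have [nub [hnub1 hnub2]] := @ex_max_supp N b hsb heb.
have lin : forall l, psum_le N (fun i => a i - b i) l =
    psum_lt N a l + a l - psum_le N b l.
  by move=> l; rewrite /psum_le sumrB -/(psum_le N a l) (@psum_split N a l hsa).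
have tlin : tot N (fun i => a i - b i) = tot N a - tot N b by rewrite /tot sumrB.
split; split.
- case=> mu [nu [hq1 hq2 hq3 hq4 [h5 [h6 h6'] h7 h8]]].
  have hn : forall i, 0 <= a i /\ 0 <= b i.
    move=> i; case: (h8 i); rewrite ge_max => /andP [h1 h2] _; split => //; lia.
  have ht : tot N a = tot N b by move: h7; rewrite tlin; lia.
  have hd : forall l, psum_le N b l <= psum_lt N a l.
    by move=> l; case: (h8 l) => _; rewrite lin; lia.
  have [hb1 hb2] := @Lb N a b mua nub hsa hsb hn ht hd hmua2 hnub2.
  by exists mua, nub; split.
- case=> mu [nu [ha1 ha2 hb1 hb2 [hn [hbl hbl'] ht hd]]].
  have bmu : b mu = 0 by apply: hbl'.
  have anu : a nu = 0 by apply: hbl.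
  exists mu, nu; split.
  + by rewrite bmu subr0.
  + by move=> i hi; rewrite ha2 // hbl' ?ltW // subr0.
  + by rewrite anu sub0r oppr_eq0.
  + by move=> i hi; rewrite hb2 // hbl ?ltW // subr0.
  + split.
    * by move=> l [hl|hl]; [apply: ha2 | apply: hbl].
    * rewrite bmu subr0; split => //; case: (hn mu) => h _; rewrite lt_def ha1 h.
      done.
    * by rewrite tlin ht subrr.
    * move=> l; case: (hn l) => h1 h2; rewrite ge_max lin; move: (hd l).
      split; [apply/andP; split|]; lia.
- case=> mu [nu [ha1 ha2 hb1 hb2 [hn [hbl hbl'] ht hd]]].
  split => //; exact: (@L23 N a b hn ht).1 hd.
- case=> hn ht h3.
  have hd := (@L23 N a b hn ht).2 h3.
  have [hb1 hb2] := @Lb N a b mua nub hsa hsb hn ht hd hmua2 hnub2.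
  by exists mua, nub; split.
Qed.
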